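(* Let $(S,\mathcal C)$ be a connectoid and $N\subseteq S$ a countably infinite connected set. Then $N$ is a necklace if and only if for every finite set $Y\subseteq N$ there is an element of $\mathcal K(N\setminus Y)$ containing almost all elements of $N$. Furthermore, if $N$ is a necklace, then the $X$-tail of $N$ is a necklace for every finite set $X\subseteq S$.
   Context: A connectoid is given by a set $S$ and a set $\mathcal F$ of finite subsets of $S$ such that (i) $F\cup F'\in\mathcal F$ whenever $F,F'\in\mathcal F$ and $F\cap F'\neq\emptyset$, and (ii) $\emptyset\in\mathcal F$ and $\{s\}\in\mathcal F$ for every $s\in S$. A set $C\subseteq S$ is connected if for all $x,y\in C$ there is $F\in\mathcal F$ with $F\subseteq C$ and $x,y\in F$; $\mathcal C$ is the set of connected sets. For $S'\subseteq S$, a component of $S'$ is a maximal connected subset of $S'$, and $\mathcal K(S')$ is the set of components of $S'$. ''Almost all'' means all but finitely many. A necklace is a connected set $N$ for which there is a family $(H_n)_{n\in\mathbb N}$ of finite connected sets with $N=\bigcup_n H_n$ and $H_i\cap H_j\neq\emptyset$ iff $|i-j|\le 1$. For a necklace $N$ and finite $X\subseteq S$, the $X$-tail of $N$ is the unique element of $\mathcal K(N\setminus X)$ containing almost all elements of $N$. *)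

(* Defs.v *)
From mathcomp Require Import all_boot.
From mathcomp Require Import boolp classical_sets functions cardinality.
Set Implicit Arguments. Unset Strict Implicit. Unset Printing Implicit Defensive.
Local Open Scope classical_set_scope.

Record connectoid (S : Type) := Connectoid {
  fam : set (set S);
  fam_finite : forall F, fam F -> finite_set F;
  fam_union : forall F F', fam F -> fam F' -> F `&` F' !=set0 -> fam (F `|` F');
  fam_set0 : fam set0;
  fam_set1 : forall s, fam [set s]
}.

Section Defs.
Variables (S : Type) (K : connectoid S).

Definition connected_set (C : set S) : Prop :=
  forall x y, C x -> C y -> exists F, fam K F /\ F `<=` C /\ F x /\ F y.

Definition component (S' C : set S) : Prop :=
  [/\ C `<=` S', connected_set C &
      forall D, D `<=` S' -> connected_set D -> C `<=` D -> D = C].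

Definition almost_all (N C : set S) : Prop := finite_set (N `\` C).

Definition necklace (N : set S) : Prop :=
  connected_set N /\
  exists H : nat -> set S,
    (forall n, finite_set (H n) /\ connected_set (H n)) /\
    N = \bigcup_n H n /\
    (forall i j, H i `&` H j !=set0 <-> ((i <= j.+1) && (j <= i.+1))%N).

Definition is_tail (N X T : set S) : Prop :=
  component (N `\` X) T /\ almost_all N T.

End Defs.

(* Main.v *)
Require Import Defs.
From mathcomp Require Import all_boot.
From mathcomp Require Import boolp classical_sets functions cardinality.
From mathcomp Require Import zify.
Set Implicit Arguments. Unset Strict Implicit.
Local Open Scope classical_set_scope.
Local Open Scope card_scope.

Lemma finite_seq (T : eqType) (s : seq T) : finite_set [set x | x \in s].
Proof.
elim: s => [|a s IH].
  by have -> : [set x : T | x \in [::]] = set0 by apply/seteqP; split.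
have -> : [set x : T | x \in a :: s] = [set x : T | x \in s] `|` [set a].
  apply/seteqP; split=> x /=; rewrite inE.
    by case/orP=> [/eqP->|h]; [right|left].
  by case=> [->|->]; rewrite ?eqxx ?orbT.
by rewrite finite_setU; split => //; apply: finite_set1.
Qed.

Lemma finite_ind (T : Type) (P : set T -> Prop) :
  P set0 -> (forall A x, finite_set A -> P A -> P (A `|` [set x])) ->
  forall A, finite_set A -> P A.
Proof.
move=> P0 PU A.
move=> /(@finite_fsetP {classic T}) [X ->].
change (P [set x : {classic T} | x \in finmap.enum_fset X]).
elim: (finmap.enum_fset X) => [|a s IH].
  by have -> : [set x : {classic T} | x \in [::]] = set0 by apply/seteqP; split.
have -> : [set x : {classic T} | x \in a :: s] = [set x : {classic T} | x \in s] `|` [set a].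
  apply/seteqP; split=> x /=; rewrite inE.
    by case/orP=> [/eqP->|h]; [right|left].
  by case=> [->|->]; rewrite ?eqxx ?orbT.
apply: PU => //. exact: (@finite_seq {classic T} s).
Qed.

Definition cpick {A : Type} (d : A) (P : A -> Prop) : A :=
  match pselect (exists x, P x) with
  | left h => proj1_sig (cid h)
  | right _ => d end.

Lemma cpickP {A : Type} (d : A) (P : A -> Prop) : (exists x, P x) -> P (cpick d P).
Proof.
move=> h; rewrite /cpick; case: pselect => // h'.
exact: (proj2_sig (cid h')).
Qed.

Section Gen.
Variables (S : Type) (K : connectoid S).

Lemma fam_conn F : fam K F -> connected_set K F.
Proof. by move=> hF x y Fx Fy; exists F; do !split. Qed.

Lemma conn_U A B : connected_set K A -> connected_set K B -> A `&` B !=set0 ->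
  connected_set K (A `|` B).
Proof.
move=> cA cB [z [Az Bz]].
have gen : forall x y, A x -> B y -> exists F, fam K F /\ F `<=` A `|` B /\ F x /\ F y.
  move=> x y Ax By.
  have [F [fF [FA [Fx Fz]]]] := cA x z Ax Az.
  have [G [fG [GB [Gz Gy]]]] := cB z y Bz By.
  exists (F `|` G); split; first by apply: fam_union => //; exists z.
  split; first by move=> w [/FA|/GB] h; [left|right].
  by split; [left|right].
move=> x y [Ax|Bx] [Ay|By].
- have [F [hF [FA FF]]] := cA x y Ax Ay; exists F; split=> //; split=> //.
  by move=> w /FA; left.
- exact: gen.
- by have [F [? [? [? ?]]]] := gen y x Ay Bx; exists F.
- have [F [hF [FB FF]]] := cB x y Bx By; exists F; split=> //; split=> //.
  by move=> w /FB; right.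
Qed.

Lemma fin_conn C z : connected_set K C -> C z -> forall A, finite_set A -> A `<=` C ->
  exists F, [/\ fam K F, F `<=` C, F z & A `<=` F].
Proof.
move=> cC Cz; apply: finite_ind.
  move=> _; exists [set z]; split => //; [exact: fam_set1| by move=> w ->].
move=> A x fA IH AxC.
have [F [fF FC Fz AF]] := IH (fun w h => AxC w (or_introl h)).
have [G [fG [GC [Gz Gx]]]] := cC z x Cz (AxC x (or_intror erefl)).
exists (F `|` G); split.
- by apply: fam_union => //; exists z.
- by move=> w [/FC|/GC].
- by left.
- by move=> w [/AF h|->]; [left|right].
Qed.

Definition Iv (H : nat -> set S) a b := [set x | exists2 n, (a <= n <= b)%N & H n x].
Definition Tl (H : nat -> set S) a := [set x | exists2 n, (a <= n)%N & H n x].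
Definition Pf (H : nat -> set S) m := [set x | exists2 n, (n < m)%N & H n x].

Lemma chain_aux (H : nat -> set S) : (forall n, connected_set K (H n)) ->
  (forall n, H n `&` H n.+1 !=set0) ->
  forall a b x y, (a <= b)%N -> H a x -> H b y ->
  exists F, [/\ fam K F, F `<=` Iv H a b, F x & F y].
Proof.
move=> hc hi a b x y; elim: b y => [|b IH] y.
  rewrite leqn0 => /eqP -> Hx Hy.
  have [F [fF [FH [Fx Fy]]]] := hc 0%N x y Hx Hy.
  by exists F; split => // w /FH h; exists 0%N.
rewrite leq_eqVlt => /orP [/eqP ab|ab] Hx Hy; rewrite ?ltnS in ab.
  subst a; have [F [fF [FH [Fx Fy]]]] := hc _ x y Hx Hy.
  by exists F; split => // w /FH h; exists b.+1 => //; rewrite leqnn.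
have [z [z1 z2]] := hi b.
have [F [fF FI Fx Fz]] := IH z ab Hx z1.
have [G [fG [GH [Gz Gy]]]] := hc _ z y z2 Hy.
exists (F `|` G); split.
- by apply: fam_union => //; exists z.
- move=> w [/FI [n /andP[n1 n2] h]|/GH h].
    by exists n => //; rewrite n1 /= (leq_trans n2).
  by exists b.+1 => //; rewrite leqnn (leq_trans ab).
- by left.
- by right.
Qed.

Lemma tail_conn (H : nat -> set S) : (forall n, connected_set K (H n)) ->
  (forall n, H n `&` H n.+1 !=set0) -> forall a, connected_set K (Tl H a).
Proof.
move=> hc hi a.
have gen : forall x y i j, (i <= j)%N -> (a <= i)%N -> H i x -> H j y ->
    exists F, fam K F /\ F `<=` Tl H a /\ F x /\ F y.
  move=> x y i j ij ai Hx Hy.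
  have [F [fF FI Fx Fy]] := chain_aux hc hi ij Hx Hy.
  exists F; split => //; split => // w /FI [n /andP[n1 n2] h].
  by exists n => //; apply: leq_trans n1.
move=> x y [i ai Hx] [j aj Hy].
case: (leqP i j) => ij; first exact: (gen x y i j).
have [F [? [? [? ?]]]] := gen y x j i (ltnW ij) aj Hy Hx.
by exists F.
Qed.

Lemma fin_cover (H : nat -> set S) Y : finite_set Y ->
  (forall x, Y x -> exists n, H n x) -> exists m, Y `<=` Pf H m.
Proof.
move: Y; apply: finite_ind.
  by move=> _; exists 0%N.
move=> A x fA IH hY.
have [m hm] := IH (fun w h => hY w (or_introl h)).
have [n hn] := hY x (or_intror erefl).
exists (maxn m n.+1) => w [/hm [k km hk]|->].
  by exists k => //; rewrite leq_max km.
by exists n => //; rewrite leq_max ltnSn orbT.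
Qed.

Lemma finite_Pf (H : nat -> set S) : (forall n, finite_set (H n)) ->
  forall m, finite_set (Pf H m).
Proof.
move=> hf; elim => [|m IH].
  by have -> : Pf H 0 = set0 by apply/seteqP; split => // x [].
have -> : Pf H m.+1 = Pf H m `|` H m.
  apply/seteqP; split => x.
    move=> [n]; rewrite ltnS leq_eqVlt => /orP[/eqP ->|nm] h; [right|left] => //.
    by exists n.
  by case => [[n nm h]|h]; [exists n => //; apply: ltnW|exists m].
by rewrite finite_setU; split.
Qed.

Lemma comp_exists (U D : set S) x0 : D `<=` U -> connected_set K D -> D x0 ->
  exists C, component K U C /\ D `<=` C.
Proof.
move=> DU cD Dx0.
pose C := [set y | exists E, [/\ E `<=` U, connected_set K E, E x0 & E y]].
have CU : C `<=` U by move=> y [E [EU _ _ Ey]]; apply: EU.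
have cC : connected_set K C.
  move=> y1 y2 [E1 [E1U cE1 E1x E1y]] [E2 [E2U cE2 E2x E2y]].
  have [F1 [f1 [F1E [F1y F1x]]]] := cE1 y1 x0 E1y E1x.
  have [F2 [f2 [F2E [F2x F2y]]]] := cE2 x0 y2 E2x E2y.
  exists (F1 `|` F2); split; first by apply: fam_union => //; exists x0.
  split; last by split; [left|right].
  move=> w [/F1E h|/F2E h]; [exists E1|exists E2]; by split.
have Cx0 : C x0 by exists D; split.
exists C; split; last by move=> y Dy; exists D; split.
split => // D' D'U cD' CD'.
apply/seteqP; split => //.
move=> y D'y; exists D'; split => //; exact: CD'.
Qed.

Lemma comp_absorb (U T D : set S) : component K U T -> D `<=` U ->
  connected_set K D -> D `&` T !=set0 -> D `<=` T.
Proof.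
move=> [TU cT mT] DU cD DT.
have cTD : connected_set K (T `|` D).
  by apply: conn_U => //; case: DT => z [? ?]; exists z.
have := mT (T `|` D) (fun w h => match h with or_introl h => TU w h | or_intror h => DU w h end) cTD (fun w h => or_introl h).
by move=> e w Dw; rewrite -e; right.
Qed.

End Gen.

Lemma neck_of (S : Type) (H : nat -> set S) :
  (forall n, H n !=set0) -> (forall n, H n `&` H n.+1 !=set0) ->
  (forall i j x, (i.+2 <= j)%N -> H i x -> H j x -> False) ->
  forall i j, H i `&` H j !=set0 <-> ((i <= j.+1) && (j <= i.+1))%N.
Proof.
move=> hne hi hd i j; split.
  move=> [x [Hi Hj]]; apply/negPn/negP; rewrite negb_and -!ltnNge => /orP[h|h].
    exact: (hd j i x h).
  exact: (hd i j x h).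
move=> /andP[h1 h2].
case: (ltngtP i j) => [lt|gt|->].
- have -> : j = i.+1 by lia.
  exact: hi.
- have -> : i = j.+1 by lia.
  by rewrite setIC; exact: hi.
- by case: (hne j) => z hz; exists z.
Qed.

Definition NProps (S : Type) (K : connectoid S) (N : set S) (H : nat -> set S) :=
  [/\ (forall n, finite_set (H n) /\ connected_set K (H n)),
      (forall x, N x <-> exists n, H n x),
      (forall n, H n !=set0), (forall n, H n `&` H n.+1 !=set0) &
      (forall i j x, (i.+2 <= j)%N -> H i x -> H j x -> False)].

Lemma neck_unpack S K N : necklace K N -> exists H : nat -> set S, NProps K N H.
Proof.
move=> [cN [H [hfc [eN hiff]]]]; exists H; split => //.
- by move=> x; rewrite eN; split => [[n _ h]|[n h]]; exists n.
- move=> n; have [z [hz _]] : H n `&` H n !=set0 by apply/(hiff n n); rewrite !leqnSn.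
  by exists z.
- by move=> n; apply/(hiff n n.+1); lia.
- move=> i j x ij Hi Hj.
  have : H i `&` H j !=set0 by exists x.
  move/(hiff i j); lia.
Qed.

Lemma neck_pack S K N (H : nat -> set S) : connected_set K N -> NProps K N H -> necklace K N.
Proof.
move=> cN [hfc eN hne hi hd]; split => //; exists H; split => //; split.
  by apply/seteqP; split => x; rewrite /= eN => -[n h]; exists n.
exact: neck_of.
Qed.

Lemma iv_conn S K (H : nat -> set S) : (forall n, connected_set K (H n)) ->
  (forall n, H n `&` H n.+1 !=set0) -> forall a b, connected_set K (Iv H a b).
Proof.
move=> hc hi a b.
have gen : forall x y i j, (i <= j)%N -> (a <= i)%N -> (j <= b)%N -> H i x -> H j y ->
    exists F, fam K F /\ F `<=` Iv H a b /\ F x /\ F y.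
  move=> x y i j ij ai jb Hx Hy.
  have [F [fF FI Fx Fy]] := chain_aux hc hi ij Hx Hy.
  exists F; split => //; split => // w /FI [n /andP[n1 n2] h].
  by exists n => //; rewrite (leq_trans ai n1) (leq_trans n2 jb).
move=> x y [i /andP[ai ib] Hx] [j /andP[aj jb] Hy].
case: (leqP i j) => ij; first exact: (gen x y i j).
have [F [? [? [? ?]]]] := gen y x j i (ltnW ij) aj ib Hy Hx.
by exists F.
Qed.

Lemma dir1 S K N (H : nat -> set S) : NProps K N H ->
  forall Y, finite_set Y -> Y `<=` N ->
  exists C, component K (N `\` Y) C /\ almost_all N C.
Proof.
move=> [hfc eN hne hi hd] Y fY YN.
have [m hm] := fin_cover fY (fun x h => proj1 (eN x) (YN x h)).
have hc n : connected_set K (H n) by case: (hfc n).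
have DU : Tl H m.+1 `<=` N `\` Y.
  move=> x [n mn Hx]; split; first by apply/eN; exists n.
  move=> Yx; have [k km Hk] := hm x Yx.
  by apply: (hd k n x) => //; apply: leq_trans mn.
have [z Hz] := hne m.+1.
have Dz : Tl H m.+1 z by exists m.+1.
have [C [cC DC]] := comp_exists DU (tail_conn hc hi (a:=m.+1)) Dz.
exists C; split => //.
apply: (sub_finite_set _ (finite_Pf (fun n => proj1 (hfc n)) m.+1)).
move=> x [Nx nCx]; have [n Hx] := proj1 (eN x) Nx.
exists n => //; rewrite ltnNge; apply/negP => mn.
by apply: nCx; apply: DC; exists n.
Qed.

Lemma part2 S K N (H : nat -> set S) : NProps K N H ->
  forall X T, finite_set X -> is_tail K N X T -> necklace K T.
Proof.
move=> [hfc eN hne hi hd] X T fX [cT aT].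
have hc n : connected_set K (H n) by case: (hfc n).
have hf n : finite_set (H n) by case: (hfc n).
have [m hm] := fin_cover (finite_setIl N fX) (fun x h => proj1 (eN x) (proj2 h)).
have DU : Tl H m.+1 `<=` N `\` X.
  move=> x [n mn Hx]; have Nx : N x by apply/eN; exists n.
  split => // Xx; have [k km Hk] := hm x (conj Xx Nx).
  by apply: (hd k n x) => //; apply: leq_trans mn.
have [k hk] := fin_cover aT (fun x h => proj1 (eN x) (proj1 h)).
have DT : Tl H m.+1 `&` T !=set0.
  have [z Hz] := hne (k + m.+2)%N.
  exists z; split; first by exists (k + m.+2)%N => //; lia.
  apply/not_notP => nTz.
  have Nz : N z by apply/eN; exists (k + m.+2)%N.
  have [l lk Hl] := hk z (conj Nz nTz).
  by apply: (hd l (k + m.+2)%N z) => //; lia.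
have DsT := comp_absorb cT DU (tail_conn hc hi (a:=m.+1)) DT.
have [z' Hz'] := hne m.+1.
have Tz' : T z' by apply: DsT; exists m.+1.
case: (cT) => TU cTT _.
pose A := T `&` Pf H m.+1.
have fA : finite_set A by apply: finite_setIr; apply: finite_Pf.
have [F [fF FT Fz' AF]] := fin_conn cTT Tz' fA (fun x h => proj1 h).
have [k2 hk2] := fin_cover (fam_finite fF) (fun x h => proj1 (eN x) (proj1 (TU x (FT x h)))).
pose k' := (k2 + m.+1)%N.
pose H' n := if n is 0 then F `|` Iv H m.+1 k' else H (k' + n)%N.
have IvT : Iv H m.+1 k' `<=` T by move=> x [n /andP[n1 _] h]; apply: DsT; exists n.
apply: (@neck_pack _ _ _ H') => //; split.
- case => [|n] /=; last by split.
  split.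
    rewrite finite_setU; split; first exact: fam_finite fF.
    apply: (sub_finite_set _ (finite_Pf hf k'.+1)).
    by move=> x [n /andP[_ n2] h]; exists n.
  apply: conn_U; first exact: fam_conn.
    exact: iv_conn.
  by exists z'; split => //; exists m.+1 => //; rewrite leqnn /k'; lia.
- move=> x; split.
    move=> Tx; have [n Hx] := proj1 (eN x) (proj1 (TU x Tx)).
    case: (leqP n m) => nm.
      by exists 0%N; left; apply: AF; split => //; exists n => //; lia.
    case: (leqP n k') => nk.
      by exists 0%N; right; exists n => //; lia.
    exists (n - k')%N; case E: (n - k')%N => [|j]; first by lia.
    by rewrite /H' -E subnKC //; lia.
  move=> [[|n] /=].
    by case => [/FT|/IvT].
  by move=> h; apply: DsT; exists (k' + n.+1)%N => //; lia.
- case => [|n] /=; last exact: hne.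
  by exists z'; left.
- case => [|n] /=.
    have [w [w1 w2]] := hi k'; exists w; split => //; last by rewrite addn1.
    by right; exists k' => //; lia.
  by rewrite !addnS; apply: hi.
- move=> i j x ij; case: j ij => [|j] ij; first by [].
  rewrite /H'; case: i ij => [|i] ij.
    case => [/hk2 [l lk Hl]|[l /andP[_ lk'] Hl]] Hj.
      by apply: (hd l (k' + j.+1)%N x) => //; lia.
    by apply: (hd l (k' + j.+1)%N x) => //; lia.
  by apply: hd; lia.
Qed.

Definition HP S (K : connectoid S) (N Y Y' : set S) (p p' : S) (H : set S) :=
  [/\ fam K H, H `<=` N `\` Y, Y' `\` Y `<=` H, H p & H p'].
Definition Hstep S (K : connectoid S) (N Y Y' : set S) (p p' : S) : set S :=
  cpick (@set0 S) (HP K N Y Y' p p').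
Definition ZP S (K : connectoid S) (N E Y' H : set S) (Z : set S) :=
  [/\ finite_set Z, Y' `|` H `|` E `<=` Z, Z `<=` N,
                          connected_set K (N `\` Z) & N `\` Z !=set0].
Definition Ystep S (K : connectoid S) (N E Y' H : set S) : set S :=
  cpick (@set0 S) (ZP K N E Y' H).

Definition stepf S (K : connectoid S) (N : set S) (f : S -> nat) (s0 : S) (n : nat)
  (st : set S * S * set S * S) : set S * S * set S * S :=
  let H := Hstep K N st.1.1.1 st.1.2 st.1.1.2 st.2 in
  let Z := Ystep K N [set x | N x /\ f x = n] st.1.2 H in
  (st.1.2, st.2, Z, cpick s0 (N `\` Z)).

Fixpoint stf S (K : connectoid S) (N : set S) (f : S -> nat) (s0 : S) (n : nat) :=
  match n with
  | 0 => (set0, s0, set0, s0)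
  | n'.+1 => stepf K N f s0 n' (stf K N f s0 n')
  end.

Definition Inv S (K : connectoid S) (N : set S) (st : set S * S * set S * S) :=
  [/\ finite_set st.1.1.1 /\ finite_set st.1.2, st.1.1.1 `<=` st.1.2, st.1.2 `<=` N,
      connected_set K (N `\` st.1.1.1) /\ connected_set K (N `\` st.1.2) &
      (N `\` st.1.1.1) st.1.1.2 /\ (N `\` st.1.2) st.2].

Lemma step_spec S (K : connectoid S) (N : set S) (f : S -> nat) (s0 : S) n st :
  connected_set K N -> ~ finite_set N -> {in N &, injective f} ->
  (forall Y, finite_set Y -> Y `<=` N -> exists C, component K (N `\` Y) C /\ almost_all N C) ->
  Inv K N st ->
  let H := Hstep K N st.1.1.1 st.1.2 st.1.1.2 st.2 in
  let Z := Ystep K N [set x | N x /\ f x = n] st.1.2 H in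
  [/\ fam K H, H `<=` N `\` st.1.1.1, st.1.2 `\` st.1.1.1 `<=` H, H st.1.1.2 & H st.2] /\
  [/\ finite_set Z, st.1.2 `|` H `|` [set x | N x /\ f x = n] `<=` Z, Z `<=` N,
      connected_set K (N `\` Z) & N `\` Z !=set0] /\
  Inv K N (stepf K N f s0 n st).
Proof.
case: st => [[[Y p] Y'] p'] /= cN infN injf hT [[fY fY'] YY' Y'N [cY cY'] [pY p'Y']].
set H := Hstep K N Y Y' p p'.
set Z := Ystep K N [set x | N x /\ f x = n] Y' H.
have hH : [/\ fam K H, H `<=` N `\` Y, Y' `\` Y `<=` H, H p & H p'].
  apply: (@cpickP _ _ (HP K N Y Y' p p')).
  have fA : finite_set ((Y' `\` Y) `|` [set p']).
    by rewrite finite_setU; split; [exact: finite_setD|exact: finite_set1].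
  have AC : (Y' `\` Y) `|` [set p'] `<=` N `\` Y.
    move=> x [[Y'x nYx]|->]; first by split => //; apply: Y'N.
    by case: p'Y' => Np' nY'p'; split => // /YY'.
  have [F [fF FC Fp AF]] := fin_conn cY pY fA AC.
  exists F; split => //; first by move=> x h; apply: AF; left.
  by apply: AF; right.
case: hH => fH HN Y'H Hp Hp'.
have fE : finite_set [set x | N x /\ f x = n].
  case: (pselect (exists x, N x /\ f x = n)) => [[x [Nx fx]]|nE].
    apply: (sub_finite_set _ (finite_set1 x)) => y [Ny fy] /=.
    by apply: injf; rewrite ?inE // fy fx.
  by apply: (sub_finite_set _ (finite_set0 S)) => y hy; apply: nE; exists y.
have hZ : [/\ finite_set Z, Y' `|` H `|` [set x | N x /\ f x = n] `<=` Z, Z `<=` N,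
      connected_set K (N `\` Z) & N `\` Z !=set0].
  apply: (@cpickP _ _ (ZP K N [set x | N x /\ f x = n] Y' H)).
  set W := Y' `|` H `|` [set x | N x /\ f x = n].
  have fW : finite_set W.
    by rewrite !finite_setU; split => //; split => //; exact: fam_finite fH.
  have WN : W `<=` N.
    move=> x [[/Y'N //|/HN []//]|[]//].
  have [C [[CU cC _] aC]] := hT W fW WN.
  have eC : N `\` (N `\` C) = C.
    by rewrite setDD; apply: setIidr => x /CU [].
  exists (N `\` C); split.
  - exact: aC.
  - move=> x Wx; split; first exact: WN.
    by move=> /CU [].
  - by move=> x /= [].
  - by rewrite eC.
  - rewrite eC; apply/set0P/negP => /eqP C0.
    by apply: infN; move: aC; rewrite /almost_all C0 setD0.
split; first by split.
split; first exact: hZ.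
case: hZ => fZ WZ ZN cZ nZ.
split => //=.
- by move=> x h; apply: WZ; left; left.
- split => //; exact: (@cpickP _ s0 (N `\` Z) nZ).
Qed.

Lemma dir2 S (K : connectoid S) (N : set S) (f : S -> nat) (s0 : S) :
  connected_set K N -> ~ finite_set N -> {in N &, injective f} -> N s0 ->
  (forall Y, finite_set Y -> Y `<=` N -> exists C, component K (N `\` Y) C /\ almost_all N C) ->
  necklace K N.
Proof.
move=> cN infN injf Ns0 hT.
pose st := stf K N f s0.
have inv : forall n, Inv K N (st n).
  elim => [|n IH].
    by split => //=; repeat split => //; rewrite setD0.
  exact: (proj2 (proj2 (step_spec s0 n cN infN injf hT IH))).
pose Yn n := (st n).1.1.1.
pose pn n := (st n).1.1.2.
pose H n := Hstep K N (Yn n) (Yn n.+1) (pn n) (pn n.+1).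
have hH n : [/\ fam K (H n), H n `<=` N `\` Yn n, Yn n.+1 `\` Yn n `<=` H n,
    H n (pn n) & H n (pn n.+1)].
  exact: (proj1 (step_spec s0 n cN infN injf hT (inv n))).
have hZ n : Yn n.+1 `|` H n `|` [set x | N x /\ f x = n] `<=` Yn n.+2.
  by case: (proj1 (proj2 (step_spec s0 n cN infN injf hT (inv n)))).
have Ymono : forall a b, (a <= b)%N -> Yn a `<=` Yn b.
  move=> a b /subnK <-; elim: (b - a)%N => [|d IH] //.
  move=> x /IH h; case: (inv (d + a)%N) => _ sub _ _ _.
  exact: sub.
have Yc : forall k x, Yn k x -> exists n, H n x.
  elim => [|k IH] x //.
  move=> h; case: (pselect (Yn k x)) => [/IH //|nY].
  by exists k; case: (hH k) => _ _ sub _ _; apply: sub.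
apply: (@neck_pack _ _ _ H) => //; split.
- move=> n; case: (hH n) => fH _ _ _ _; split; [exact: fam_finite fH|exact: fam_conn].
- move=> x; split.
    move=> Nx; apply: (Yc (f x).+2); apply: hZ; right; by split.
  by move=> [n /(fun h => match hH n with And5 _ s _ _ _ => s x h end) []].
- by move=> n; exists (pn n); case: (hH n).
- by move=> n; exists (pn n.+1); split; [case: (hH n)|case: (hH n.+1)].
- move=> i j x ij Hi Hj.
  case: (hH j) => _ sub _ _ _; case: (sub x Hj) => _; apply.
  apply: (Ymono i.+2 j ij); apply: hZ; left; right; exact: Hi.
Qed.

Unset Implicit Arguments.

Theorem corollary2p3 (S : Type) (K : connectoid S) (N : set S) :
  N #= [set: nat] -> connected_set K N ->
  (necklace K N <->
     (forall Y : set S, finite_set Y -> Y `<=` N ->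
        exists C, component K (N `\` Y) C /\ almost_all N C)) /\
  (necklace K N ->
     forall X : set S, finite_set X ->
       forall T, is_tail K N X T -> necklace K T).
Proof.
move=> hN cN.
have infN : ~ finite_set N by rewrite (eq_finite_set hN); exact: infinite_nat.
have [s0 Ns0] := infinite_setN0 infN.
have [f [_ injf _]] := card_set_bijP hN.
split.
  split.
    by move=> /neck_unpack [H hP]; exact: dir1 hP.
  exact: dir2 cN infN injf Ns0.
by move=> /neck_unpack [H hP] X fX T hT; exact: part2 hP X T fX hT.
Qed.
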